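(* Let $N_1,\dots,N_d$ be positive integers. For any integer $s\ge2$ and any $X\subseteq[N_1]\times\cdots\times[N_d]$, \[ \sum_{\mathbf{b}\in\mathbb{Z}^d\setminus\{\mathbf{0}\}}|U^d(X,\mathbf{b},s)|\le|X|\prod_{i=1}^d\Big(4\frac{N_i}{s}+1\Big). \]
   Context: $[N]=\{1,\dots,N\}$. For $\mathbf{b}\in\mathbb{Z}^d\setminus\{\mathbf{0}\}$, points $\mathbf{x},\mathbf{x}'$ are congruent mod $\mathbf{b}$ if $\mathbf{x}-\mathbf{x}'\in\mathbb{Z}\mathbf{b}$. $U^d(X,\mathbf{b},s)$ is the set of $\mathbf{x}\in X$ such that $|\{\mathbf{x}'\in X:\mathbf{x}'\equiv\mathbf{x}\pmod{\mathbf{b}}\}|\ge s$. *)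

(* Defs.v *)
From HB Require Import structures.
From mathcomp Require Import all_boot all_order all_algebra.
From mathcomp Require Import finmap.
From mathcomp Require Import boolp.
Set Implicit Arguments. Unset Strict Implicit. Unset Printing Implicit Defensive.
Import Order.TTheory GRing.Theory Num.Theory.
Local Open Scope ring_scope.
Local Open Scope fset_scope.

Definition congr_mod (d : nat) (b x x' : 'rV[int]_d) : Prop :=
  exists k : int, x - x' = k *: b.

Definition U (d : nat) (X : {fset 'rV[int]_d}) (b : 'rV[int]_d) (s : nat)
  : {fset 'rV[int]_d} :=
  [fset x in X | (s <= #|` [fset x' in X | `[< congr_mod b x' x >]]|)%N].

Definition in_box (d : nat) (N : 'I_d -> nat) (X : {fset 'rV[int]_d}) : Prop :=
  forall x, x \in X -> forall i : 'I_d, (1 <= x 0 i)%R /\ (x 0 i <= (N i)%:Z)%R.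

(* Main.v *)
Require Import Defs.
From HB Require Import structures.
From mathcomp Require Import all_boot all_order all_algebra.
From mathcomp Require Import finmap.
From mathcomp Require Import boolp.
From mathcomp Require Import zify.
Import Order.TTheory GRing.Theory Num.Theory.
Local Open Scope ring_scope.
Local Open Scope fset_scope.

Lemma aux1 (t : int) (n : nat) : (1 <= t)%R -> (t <= n%:Z)%R -> (absz (t - 1)%R <= n.-1)%N.
Proof. rewrite -subn1; lia. Qed.

Lemma geo (d : nat) (N : 'I_d -> nat) (s : nat) (hs : (2 <= s)%N)
  (X : {fset 'rV[int]_d}) (hX : in_box N X) (b x : 'rV[int]_d) (i : 'I_d) :
  x \in U X b s -> (`|b 0%R i|%N <= (N i).-1 %/ s.-1)%N.
Proof.
rewrite /U !inE => /andP[xX].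
set S := [fset x' in X | `[< congr_mod b x' x >]] => hS.
have [b0|bn0] := eqVneq (b 0 i) 0; first by rewrite b0.
set m := `|b 0%R i|%N.
have m0 : (0 < m)%N by rewrite absz_gt0.
set g := fun x' : 'rV[int]_d => ((absz (x' 0 i - 1)%R) %/ m)%N.
have memS : forall y, y \in S -> [/\ y \in X, (1 <= y 0 i) /\ (y 0 i <= (N i)%:Z)
    & exists k : int, y 0 i - x 0 i = k * b 0 i /\ y - x = k *: b].
  move=> y; rewrite !inE => /andP[yX /asboolP [k hk]]; split => //.
    exact: hX.
  exists k; split => //.
  by have := congr1 (fun M : 'rV[int]_d => M 0 i) hk; rewrite !mxE.
have inj : {in S &, injective g}.
  move=> y1 y2 /memS [_ [h11 h12] [k1 [hk1 hK1]]] /memS [_ [h21 h22] [k2 [hk2 hK2]]].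
  rewrite /g => hq.
  have e1 := divn_eq (absz (y1 0 i - 1)%R) m.
  have e2 := divn_eq (absz (y2 0 i - 1)%R) m.
  have r1 := ltn_pmod (absz (y1 0 i - 1)%R) m0.
  have r2 := ltn_pmod (absz (y2 0 i - 1)%R) m0.
  rewrite hq in e1.
  have hm : m = `|b 0%R i|%N by [].
  have kk : k1 = k2.
    move: e1 e2 r1 r2 hm h11 h12 h21 h22 hk1 hk2.
    set q := (_ %/ m)%N; set a1 := (_ %% m)%N; set a2 := (_ %% m)%N.
    move=> e1 e2 r1 r2 hm h11 h12 h21 h22 hk1 hk2.
    have : (k1 - k2) * b 0 i = a1%:Z - a2%:Z by lia.
    move=> H; apply/eqP; rewrite -subr_eq0; apply/eqP.
    apply/eqP; apply: contraTT r1 => kn0.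
    have : (`|(k1 - k2) * b 0 i| >= `|b 0 i|)%R.
      have h1 : (1 <= `|k1 - k2|)%R by lia.
      by rewrite normrM ler_peMl.
    rewrite H; lia.
  have : (y1 - x = y2 - x)%R by rewrite hK1 hK2 kk.
  by move/addIr.
have /eqP cE : #|` g @` S| == #|` S| by apply/card_in_imfsetP.
have le : (#|` [fset g y | y in S]| <= ((N i).-1 %/ m).+1)%N.
  have := @uniq_leq_size _ (g @` S) (iota 0 ((N i).-1 %/ m).+1).
  rewrite size_iota; apply; first exact: fset_uniq.
  move=> z /imfsetP [y yS ->]; rewrite mem_iota add0n ltnS /g.

  apply: leq_div2r; case/memS: yS => _ [h1 h2] _.
  by apply: aux1.
have : (s.-1 * m <= (N i).-1)%N.
  rewrite -leq_divRL //.
  have := leq_trans hS (leq_trans (eq_leq (esym cE)) le).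
  by case: (s) hs.
rewrite leq_divRL; last lia.
by rewrite mulnC.
Qed.
Lemma prodE (I : finType) (F : I -> nat) : foldr muln 1 [seq F x | x : I] = (\prod_(x : I) F x)%N.
Proof. by rewrite foldrE big_map big_enum. Qed.
Lemma aux2 (t : int) (m : nat) : (absz t <= m)%N -> (absz (t + m%:Z)%R < m.*2.+1)%N.
Proof. rewrite -mul2n; lia. Qed.
Lemma aux3 (t u : int) (m : nat) : (absz t <= m)%N -> (absz u <= m)%N -> absz (t + m%:Z)%R = absz (u + m%:Z)%R -> t = u.
Proof. lia. Qed.
Lemma aux4 (n s q : nat) : (2 <= s)%N -> (0 < n)%N -> q = (n.-1 %/ s.-1)%N -> (q.*2 * s <= 4 * n)%N.
Proof. move=> hs hn hq. have := leq_divM n.-1 s.-1. rewrite -hq -!subn1 -mul2n. nia. Qed.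

Theorem lemma2p3 (d : nat) (N : 'I_d -> nat) (hN : forall i, (0 < N i)%N)
  (s : nat) (hs : (2 <= s)%N) (X : {fset 'rV[int]_d}) (hX : in_box N X)
  (B : {fset 'rV[int]_d}) (hB : 0 \notin B) :
  ((\sum_(b <- B) #|` U X b s|)%N%:R : rat)
    <= (#|` X|)%:R * \prod_(i < d) (4 * (N i)%:R / s%:R + 1).
Proof.
set M := fun i => ((N i).-1 %/ s.-1)%N.
set P := fun b : 'rV[int]_d => [forall i, (absz (b 0%R i) <= M i)%N].
have h1 : (\sum_(b <- B) #|` U X b s| <= \sum_(b <- B | P b) #|` X|)%N.
  rewrite [X in (_ <= X)%N]big_mkcond /=; apply: leq_sum => b _; case: ifP => hb.
    apply: fsubset_leq_card; apply/fsubsetP => y; rewrite /U !inE => /andP[] //.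
  rewrite leqn0 cardfs_eq0; apply/eqP/fsetP => y; rewrite in_fset0; apply/negP => hy.
  move/negbT: hb => /forallPn [i]; by rewrite (@geo d N s hs X hX b y i hy).
have h2 : (\sum_(b <- B | P b) #|` X| = count P B * #|` X|)%N.
  by rewrite big_const_seq iter_addn_0 mulnC.
have h3 : (count P B <= \prod_(i < d) (M i).*2.+1)%N.
  rewrite -size_filter.
  pose T := {dffun forall i : 'I_d, 'I_(M i).*2.+1}.
  pose f := fun b : 'rV[int]_d => (@finfun _ (fun i => 'I_(M i).*2.+1)
                 (fun i => inord (absz (b 0%R i + (M i)%:Z)%R)) : T).
  have u : uniq (map f [seq b <- B | P b]).
    rewrite map_inj_in_uniq ?filter_uniq ?fset_uniq //.
    move=> b1 b2; rewrite !mem_filter => /andP[/forallP p1 _] /andP[/forallP p2 _] e.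
    apply/rowP => j.
    have := congr1 (fun F : T => val (F j)) e; rewrite /f !ffunE /= !inordK; last 2 first.
    - exact: aux2.
    - exact: aux2.
    by apply: aux3.
  rewrite -(size_map f); apply: (leq_trans (uniq_leq_size u (fun z _ => mem_enum T z))).
  by rewrite -cardE card_dep_ffun prodE; under eq_bigr do rewrite card_ord.
apply: (le_trans (y := (#|` X| * \prod_(i<d) (M i).*2.+1)%N%:R)).
  rewrite ler_nat; apply: (leq_trans h1); rewrite h2 mulnC leq_mul2l h3 orbT //.
rewrite natrM natr_prod ler_wpM2l //; apply: ler_prod => i _; rewrite ler0n /=.
rewrite -addn1 natrD lerD2r ler_pdivlMr ?ltr0n; last by case: (s) hs.
rewrite -!natrM ler_nat.
exact: aux4.
Qed.
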